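(* Let $u$ and $v$ be two prime words such that $u<_{lex}v$. Then $u^\alpha<_{lex}u^\alpha v\le_{lex}v$ for every ordinal $\alpha$.
   Context: $A$ is a finite alphabet with a linear order $<_A$. Words are sequences of letters indexed by countable ordinals, $x^\alpha$ is the concatenation of $\alpha$ copies of $x$. A suffix of $x$ is $x[\gamma,|x|)$, proper if $0<\gamma<|x|$. Write $x<_{str}x'$ if there are letters $a<_Ab$ and words $y,z,z'$ with $x=yaz$, $x'=ybz'$; $x\le_{lex}x'$ iff $x$ is a prefix of $x'$ or $x<_{str}x'$; $<_{lex}$ is its strict version. A word is primitive if $x=y^\alpha$ implies $\alpha=1$ and $y=x$; $w$ is prime if it is primitive and every proper suffix $z$ satisfies $w\le_{lex}z$. *)

(* Defs.v *)
(* An "ordinal" is represented by a (raw) strictly ordered type; validity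
   (strict total, well-founded, countable) is a separate predicate [is_ord].
   Words are compared up to label-preserving order isomorphism [weq]. *)
From HB Require Import structures.
From mathcomp Require Import all_boot all_order.
Set Implicit Arguments. Unset Strict Implicit. Unset Printing Implicit Defensive.
Import Order.TTheory.
Local Open Scope order_scope.

Record ord := Ord { ot : Type; olt : ot -> ot -> Prop }.

Definition is_ord (o : ord) : Prop :=
  [/\ (forall x : ot o, ~ olt x x),
      (forall x y z : ot o, olt x y -> olt y z -> olt x z),
      (forall x y : ot o, olt x y \/ x = y \/ olt y x),
      well_founded (@olt o)
    & exists f : ot o -> nat, injective f].

Definition Osum (a b : ord) : ord :=
  Ord (fun p q : ot a + ot b => match p, q with
    | inl x, inl y => olt x y
    | inr x, inr y => olt x y
    | inl _, inr _ => True
    | inr _, inl _ => False end).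

(* ordinal product: alpha copies of x, positions (i, p), i in alpha major *)
Definition Oprod (x alpha : ord) : ord :=
  Ord (fun p q : ot alpha * ot x =>
         olt p.1 q.1 \/ (p.1 = q.1 /\ olt p.2 q.2)).

Section Words.
Variables (d : Order.disp_t) (A : finOrderType d).

Record word := Word { wo : ord; lab : ot wo -> A }.

Definition is_word (w : word) : Prop := is_ord (wo w).

Definition nonempty (w : word) : Prop := inhabited (ot (wo w)).

Definition wletter (c : A) : word :=
  @Word (Ord (fun _ _ : unit => False)) (fun _ => c).

Definition wcat (x y : word) : word :=
  @Word (Osum (wo x) (wo y))
    (fun p => match p with inl i => lab i | inr j => lab j end).

Definition wpow (x : word) (alpha : ord) : word :=
  @Word (Oprod (wo x) alpha) (fun p => lab p.2).

Definition weq (x y : word) : Prop :=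
  exists f : ot (wo x) -> ot (wo y),
    [/\ bijective f,
        (forall p q, olt p q <-> olt (f p) (f q))
      & (forall p, lab (f p) = lab p)].

Definition wprefix (x x' : word) : Prop :=
  exists z, is_word z /\ weq x' (wcat x z).

Definition str_lt (x x' : word) : Prop :=
  exists (y z z' : word) (a b : A),
    [/\ is_word y, is_word z, is_word z', a < b &
        weq x (wcat (wcat y (wletter a)) z) /\
        weq x' (wcat (wcat y (wletter b)) z')].

Definition lex_le (x x' : word) : Prop := wprefix x x' \/ str_lt x x'.
Definition lex_lt (x x' : word) : Prop := lex_le x x' /\ ~ weq x x'.

Definition is_one (alpha : ord) : Prop := exists t : ot alpha, forall s, s = t.

Definition primitive (x : word) : Prop :=
  forall (y : word) (alpha : ord), is_word y -> is_ord alpha ->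
    weq x (wpow y alpha) -> is_one alpha /\ weq y x.

Definition prime_word (w : word) : Prop :=
  primitive w /\
  forall y z : word, is_word y -> is_word z -> nonempty y -> nonempty z ->
    weq w (wcat y z) -> lex_le w z.

End Words.

(* Main.v *)
Require Import Defs.
From mathcomp Require Import all_boot all_order.
From Stdlib Require Import Classical ClassicalEpsilon ProofIrrelevance Wellfounded.
Set Implicit Arguments. Unset Strict Implicit. Unset Printing Implicit Defensive.
Import Order.TTheory.

Lemma sig_eq (T : Type) (P : T -> Prop) (a b : {x | P x}) :
  proj1_sig a = proj1_sig b -> a = b.
Proof. case: a => x px; case: b => y py /= e; subst y; by rewrite (proof_irrelevance _ px py). Qed.

Definition Osub (o : ord) (P : ot o -> Prop) : ord :=
  Ord (fun a b : {x | P x} => olt (proj1_sig a) (proj1_sig b)).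

Definition dclosed (o : ord) (S : ot o -> Prop) := forall x y : ot o, olt x y -> S y -> S x.

Section OrdFacts.
Variable o : ord.
Hypothesis Ho : is_ord o.
Lemma o_irr (x : ot o) : ~ olt x x. Proof. by case: Ho => H _ _ _ _; apply: H. Qed.
Lemma o_trans (x y z : ot o) : olt x y -> olt y z -> olt x z.
Proof. by case: Ho => _ H _ _ _; apply: H. Qed.
Lemma o_tri (x y : ot o) : olt x y \/ x = y \/ olt y x.
Proof. by case: Ho => _ _ H _ _; apply: H. Qed.
Lemma o_wf : well_founded (@olt o). Proof. by case: Ho. Qed.
Lemma o_asym (x y : ot o) : olt x y -> olt y x -> False.
Proof. move=> a b; exact: (o_irr (o_trans a b)). Qed.
Lemma o_min (P : ot o -> Prop) : (exists x, P x) -> exists x, P x /\ forall y, P y -> ~ olt y x.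
Proof.
move=> [x Px]; apply: NNPP => Hn; move: Px; pattern x; apply: (well_founded_ind o_wf).
move=> z IH Pz; apply: Hn; exists z; split=> // y Py lt; exact: (IH y lt Py).
Qed.
Lemma dclosed_lt (p : ot o) : dclosed (fun r => olt r p).
Proof. move=> x y a b; exact: o_trans a b. Qed.
Lemma lts_inj (p q : ot o) : (forall r, olt r p <-> olt r q) -> p = q.
Proof.
move=> H; case: (o_tri p q) => [lt|[//|lt]].
- by have := o_irr ((proj2 (H p)) lt).
- by have := o_irr ((proj1 (H q)) lt).
Qed.
End OrdFacts.
Arguments dclosed_lt {o} Ho p.

Lemma is_ord_sub (o : ord) (P : ot o -> Prop) : is_ord o -> is_ord (Osub P).
Proof.
move=> Ho; split.
- move=> x; exact: (o_irr Ho).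
- move=> x y z; exact: (o_trans Ho).
- move=> x y; case: (o_tri Ho (proj1_sig x) (proj1_sig y)) => [h|[h|h]]; [left|right;left|right;right] => //.
  exact: sig_eq.
- exact: (@wf_inverse_image {x | P x} (ot o) (@olt o) (@proj1_sig _ P) (o_wf Ho)).
- case: Ho => _ _ _ _ [f fi]; exists (fun x => f (proj1_sig x)) => x y /fi; exact: sig_eq.
Qed.

Lemma is_ord_sum (a b : ord) : is_ord a -> is_ord b -> is_ord (Osum a b).
Proof.
move=> Ha Hb; split.
- case=> x /=; [exact: (o_irr Ha) | exact: (o_irr Hb)].
- case=> x [] y [] z //=; [exact: (o_trans Ha) | exact: (o_trans Hb)].
- case=> x [] y.
  + case: (o_tri Ha x y) => [h|[->|h]]; [left; exact: h|right;left;reflexivity|right;right;exact: h].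
  + left; exact: I.
  + right; right; exact: I.
  + case: (o_tri Hb x y) => [h|[->|h]]; [left; exact: h|right;left;reflexivity|right;right;exact: h].
- have HA : forall x, Acc (@olt (Osum a b)) (inl x).
    move=> x; elim: (o_wf Ha x) => {}x _ IH; constructor; case=> y H.
      exact: (IH y H).
    case: H.
  case=> [x|]; first exact: HA.
  move=> x; elim: (o_wf Hb x) => {}x _ IH; constructor; case=> y H.
    exact: HA.
  exact: (IH y H).
- case: Ha => _ _ _ _ [f fi]; case: Hb => _ _ _ _ [g gi].
  exists (fun p => pickle (match p with inl x => inl (f x) | inr y => inr (g y) end : nat + nat)).
  move=> [x|x] [y|y] /(pcan_inj pickleK) H.
  + case: H => H; by rewrite (fi _ _ H).
  + discriminate H.
  + discriminate H.
  + case: H => H; by rewrite (gi _ _ H).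
Qed.

Lemma is_ord_prod (x al : ord) : is_ord x -> is_ord al -> is_ord (Oprod x al).
Proof.
move=> Hx Ha; split.
- move=> [i p] /= [h|[_ h]]; [exact: (o_irr Ha h)| exact: (o_irr Hx h)].
- move=> [i p] [j q] [k r] /= [h|[e h]] [h'|[e' h']]; subst => /=.
  + left; exact: (o_trans Ha h h').
  + by left.
  + by left.
  + right; split=> //; exact: (o_trans Hx h h').
- move=> [i p] [j q] /=; case: (o_tri Ha i j) => [h|[e|h]].
  + by left; left.
  + subst j; case: (o_tri Hx p q) => [h|[e|h]].
    * by left; right.
    * by subst; right; left.
    * by right; right; right.
  + by right; right; left.
- suff H : forall i p, Acc (@olt (Oprod x al)) (i, p) by case.
  move=> i; elim: (o_wf Ha i) => {}i _ IHi p.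
  elim: (o_wf Hx p) => {}p _ IHp; constructor; case=> j q /= [h|[e h]].
  + exact: IHi.
  + subst j; exact: IHp.
- case: Ha => _ _ _ _ [f fi]; case: Hx => _ _ _ _ [g gi].
  exists (fun p => pickle (f p.1, g p.2)); move=> [i p] [j q] /(pcan_inj pickleK) [] /fi -> /gi ->; reflexivity.
Qed.

Section Words2.
Variables (d : Order.disp_t) (A : finOrderType d).
Local Notation W := (word A).
Local Notation pos w := (ot (wo w)).

Definition wsub (w : W) (S : pos w -> Prop) : W :=
  @Word _ A (Osub S) (fun a => lab (proj1_sig a)).
Arguments wsub w S : clear implicits.

Lemma is_word_sub (w : W) S : is_word w -> is_word (wsub w S).
Proof. exact: is_ord_sub. Qed.

Record pisof (x y : W) (S : pos x -> Prop) (T : pos y -> Prop) (f : pos x -> pos y) : Prop :=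
  PIso {
  pi_map : forall p, S p -> T (f p);
  pi_onto : forall q, T q -> exists2 p, S p & f p = q;
  pi_mono : forall p p', S p -> S p' -> olt p p' -> olt (f p) (f p');
  pi_lab : forall p, S p -> lab (f p) = lab p }.
Arguments pisof : clear implicits.

Definition piso (x y : W) S T := exists f, pisof x y S T f.
Arguments piso : clear implicits.

Lemma pi_id (x : W) S : pisof x x S S id.
Proof. split=> //; move=> q Sq; by exists q. Qed.

Lemma pi_comp (x y z : W) S T R f g :
  pisof x y S T f -> pisof y z T R g -> pisof x z S R (fun p => g (f p)).
Proof.
move=> [m1 o1 mo1 l1] [m2 o2 mo2 l2]; split.
- move=> p Sp; exact: m2 (m1 p Sp).
- move=> q Rq; case: (o2 q Rq) => p' Tp' <-; case: (o1 p' Tp') => p Sp <-; by exists p.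
- move=> p p' Sp Sp' lt; apply: mo2; [exact: m1|exact: m1|exact: mo1].
- move=> p Sp; rewrite l2; [exact: l1 | exact: m1].
Qed.

Lemma pi_ext (x y : W) S S' T T' f :
  (forall p, S p <-> S' p) -> (forall q, T q <-> T' q) -> pisof x y S T f -> pisof x y S' T' f.
Proof.
move=> HS HT [m o mo l]; split.
- move=> p /HS Sp; apply/HT; exact: m.
- move=> q /HT Tq; case: (o q Tq) => p Sp e; exists p => //; exact/HS.
- move=> p p' /HS Sp /HS Sp'; exact: mo.
- move=> p /HS; exact: l.
Qed.

Section WithWords.
Variables (x y : W).
Hypotheses (Hx : is_word x) (Hy : is_word y).

Lemma pi_refl_lt S T f p p' : pisof x y S T f -> S p -> S p' -> olt (f p) (f p') -> olt p p'.
Proof.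
move=> [_ _ mo _] Sp Sp' lt; case: (o_tri Hx p p') => [//|[e|h]].
- subst p'; case: (o_irr Hy lt).
- case: (o_asym Hy lt (mo _ _ Sp' Sp h)).
Qed.

Lemma pi_inj S T f p p' : pisof x y S T f -> S p -> S p' -> f p = f p' -> p = p'.
Proof.
move=> [_ _ mo _] Sp Sp' e; case: (o_tri Hx p p') => [h|[//|h]].
- have := mo _ _ Sp Sp' h; rewrite e => /(o_irr Hy) [].
- have := mo _ _ Sp' Sp h; rewrite e => /(o_irr Hy) [].
Qed.

Lemma pi_sym S T f : pisof x y S T f -> inhabited (pos x) ->
  exists g, [/\ pisof y x T S g, (forall q, T q -> f (g q) = q) & (forall p, S p -> g (f p) = p)].
Proof.
move=> H [x0]; have E : forall q, exists p, T q -> S p /\ f p = q.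
  move=> q; case: (classic (T q)) => Tq.
  - case: (pi_onto H Tq) => p Sp e; by exists p.
  - by exists x0.
pose g q := proj1_sig (constructive_indefinite_description _ (E q)).
have gS : forall q, T q -> S (g q) /\ f (g q) = q.
  move=> q; exact: (proj2_sig (constructive_indefinite_description _ (E q))).
have gf : forall p, S p -> g (f p) = p.
  move=> p Sp; have [S1 e1] := gS _ (pi_map H Sp); exact: (pi_inj H S1 Sp e1).
exists g; split=> //; last by move=> q /gS [].
split.
- by move=> q /gS [].
- move=> p Sp; exists (f p); [exact: (pi_map H Sp) | exact: gf].
- move=> q q' Tq Tq' lt; have [S1 e1] := gS _ Tq; have [S2 e2] := gS _ Tq'.
  apply: (pi_refl_lt H S1 S2); by rewrite e1 e2.
- move=> q Tq; have [S1 e1] := gS _ Tq; rewrite -{2}e1; symmetry; exact: (pi_lab H S1).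
Qed.

Lemma pi_G S T f g : pisof x y S T f -> dclosed T ->
  (forall p p', S p -> S p' -> olt p p' -> olt (g p) (g p')) ->
  forall p, S p -> ~ olt (g p) (f p).
Proof.
move=> H dT gm p; pattern p; apply: (well_founded_ind (o_wf Hx)) => {}p IH Sp lt.
have Tg : T (g p) := dT _ _ lt (pi_map H Sp).
case: (pi_onto H Tg) => p' Sp' e.
have lt' : olt p' p by apply: (pi_refl_lt H Sp' Sp); rewrite e.
apply: (IH p' lt' Sp'); rewrite e; exact: gm.
Qed.
End WithWords.

Lemma pi_UQ (x : W) S S' f : is_word x -> pisof x x S S' f -> dclosed S -> dclosed S' ->
  (forall p, S p -> f p = p) /\ (forall p, S p <-> S' p).
Proof.
move=> Hx H dS dS'.
have fp : forall p, S p -> f p = p.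
  move=> p Sp; case: (o_tri Hx (f p) p) => [lt|[//|lt]].
  - case: (pi_G Hx Hx (pi_id S) dS (pi_mono H) Sp lt).
  - case: (pi_G Hx Hx H dS' (g := id) (fun _ _ _ _ h => h) Sp lt).
split=> // p; split.
- move=> Sp; have := pi_map H Sp; by rewrite (fp p Sp).
- move=> S'p; case: (pi_onto H S'p) => p' Sp' e; by rewrite -e fp.
Qed.

Lemma pi_restr (x y : W) S T f p : is_word x -> is_word y -> pisof x y S T f ->
  dclosed S -> dclosed T -> S p -> pisof x y (fun r => olt r p) (fun r => olt r (f p)) f.
Proof.
move=> Hx Hy H dS dT Sp; split.
- move=> r lt; apply: (pi_mono H) => //; exact: dS lt Sp.
- move=> q lt; have Tq := dT _ _ lt (pi_map H Sp).
  case: (pi_onto H Tq) => r Sr e; exists r => //.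
  apply: (pi_refl_lt Hx Hy H Sr Sp); by rewrite e.
- move=> r r' lt lt'; apply: (pi_mono H); [exact: dS lt Sp|exact: dS lt' Sp].
- move=> r lt; apply: (pi_lab H); exact: dS lt Sp.
Qed.

End Words2.
Arguments pisof {d A} x y S T f.
Arguments piso {d A} x y S T.
Arguments wsub {d A} w S.

Section Words3.
Variables (d : Order.disp_t) (A : finOrderType d).
Local Notation W := (word A).
Local Notation pos w := (ot (wo w)).

Lemma dclosed_true (o : ord) : dclosed (fun _ : ot o => True).
Proof. by []. Qed.

Section Total.
Variables (x y : W).
Hypotheses (Hx : is_word x) (Hy : is_word y).
Definition Mrel (p : pos x) (q : pos y) :=
  piso x y (fun r => olt r p) (fun r => olt r q) /\ lab p = lab q.

Lemma M_fun p q q' : Mrel p q -> Mrel p q' -> q = q'.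
Proof.
move=> [[f Hf] _] [[g Hg] _].
have [f' [Hf' _ _]] := pi_sym Hx Hy Hf (inhabits p).
have [_ E] := pi_UQ Hy (pi_comp Hf' Hg) (dclosed_lt Hy q) (dclosed_lt Hy q').
apply: (lts_inj Hy) => r; exact: E r.
Qed.

Lemma M_down p q p' : Mrel p q -> olt p' p -> exists2 q', Mrel p' q' & olt q' q.
Proof.
move=> [[f Hf] _] lt.
have H := pi_restr Hx Hy Hf (dclosed_lt Hx p) (dclosed_lt Hy q) lt.
exists (f p'); last exact: (pi_map Hf lt).
split; first by exists f.
by rewrite (pi_lab Hf lt).
Qed.

Lemma M_down_y p q q' : Mrel p q -> olt q' q -> exists2 p', Mrel p' q' & olt p' p.
Proof.
move=> [[f Hf] _] lt.
case: (pi_onto Hf lt) => p' lt' e; exists p' => //.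
have H := pi_restr Hx Hy Hf (dclosed_lt Hx p) (dclosed_lt Hy q) lt'.
rewrite e in H; split; first by exists f.
by rewrite -e (pi_lab Hf lt').
Qed.

Theorem total :
  (exists2 T, dclosed T & piso x y (fun _ => True) T) \/
  (exists p, piso y x (fun _ => True) (fun r => olt r p)) \/
  (exists p q, piso x y (fun r => olt r p) (fun r => olt r q) /\ lab p <> lab q).
Proof.
case: (classic (inhabited (pos x))) => [[x0]|nx]; last first.
  left; exists (fun _ => False); first by [].
  exists (fun p => False_rect _ (nx (inhabits p))); split.
  - move=> p; case: (nx (inhabits p)).
  - by [].
  - move=> p; case: (nx (inhabits p)).
  - move=> p; case: (nx (inhabits p)).
case: (classic (inhabited (pos y))) => [[y0]|ny]; last first.
  right; left.
  have [p [_ pm]] := o_min Hx (ex_intro (fun _ => True) x0 I).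
  exists p; exists (fun q => False_rect _ (ny (inhabits q))); split.
  - move=> q; case: (ny (inhabits q)).
  - move=> r lt; case: (pm r I lt).
  - move=> q; case: (ny (inhabits q)).
  - move=> q; case: (ny (inhabits q)).
pose S p := exists q, Mrel p q.
pose T q := exists p, Mrel p q.
have E : forall p, exists q, S p -> Mrel p q.
  move=> p; case: (classic (S p)) => [[q M]|nS]; first by exists q.
  by exists y0.
pose f p := proj1_sig (constructive_indefinite_description _ (E p)).
have fS : forall p, S p -> Mrel p (f p).
  move=> p; exact: (proj2_sig (constructive_indefinite_description _ (E p))).
have Hf : pisof x y S T f.
  split.
  - move=> p Sp; exists p; exact: fS.
  - move=> q [p Mpq]; exists p; first by exists q.
    exact: M_fun (fS p (ex_intro _ q Mpq)) Mpq.
  - move=> p p' Sp Sp' lt; have [q' M' lt'] := M_down (fS p' Sp') lt.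
    by rewrite (M_fun (fS p Sp) M').
  - move=> p Sp; by case: (fS p Sp) => _ ->.
have dS : dclosed S.
  move=> p' p lt [q M]; have [q' M' _] := M_down M lt; by exists q'.
have dT : dclosed T.
  move=> q' q lt [p M]; have [p' M' _] := M_down_y M lt; by exists p'.
case: (classic (forall p, S p)) => [allS|].
  left; exists T => //; exists f.
  exact: pi_ext _ _ Hf.
move=> /not_all_ex_not [p0' np0'].
have [p0 [np0 minp0]] := o_min Hx (ex_intro (fun p => ~ S p) p0' np0').
have ES : forall p, S p <-> olt p p0.
  move=> p; split.
  - move=> Sp; case: (o_tri Hx p p0) => [//|[e|lt]].
    + by subst p.
    + case: np0; exact: dS lt Sp.
  - move=> lt; apply: NNPP => nS; exact: minp0 p nS lt.
case: (classic (forall q, T q)) => [allT|].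
  right; left; exists p0.
  have Hf' : pisof x y (fun r => olt r p0) (fun _ => True) f.
    exact: pi_ext ES (fun q => conj (fun _ => I) (fun _ => allT q)) Hf.
  have [g [Hg _ _]] := pi_sym Hx Hy Hf' (inhabits x0); by exists g.
move=> /not_all_ex_not [q0' nq0'].
have [q0 [nq0 minq0]] := o_min Hy (ex_intro (fun q => ~ T q) q0' nq0').
have ET : forall q, T q <-> olt q q0.
  move=> q; split.
  - move=> Tq; case: (o_tri Hy q q0) => [//|[e|lt]].
    + by subst q.
    + case: nq0; exact: dT lt Tq.
  - move=> lt; apply: NNPP => nT; exact: minq0 q nT lt.
have Hf' := pi_ext ES ET Hf.
right; right; exists p0, q0; split; first by exists f.
move=> e; apply: np0; exists q0; split=> //; by exists f.
Qed.
End Total.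

Definition pprefix (x y : W) := exists2 T, dclosed T & piso x y (fun _ => True) T.
Definition pproper (x y : W) := exists p, piso x y (fun _ => True) (fun r => olt r p).
Definition pstr (x y : W) := exists p q,
  piso x y (fun r => olt r p) (fun r => olt r q) /\ (lab p < lab q)%O.

Section Excl.
Variables (x y : W).
Hypotheses (Hx : is_word x) (Hy : is_word y).

Lemma X1 : pstr x y -> pstr y x -> False.
Proof.
move=> [p [q [[f Hf] lpq]]] [q' [p' [[g Hg] lqp]]].
case: (o_tri Hy q q') => [lt|[e|lt]].
- have Hg' := pi_restr Hy Hx Hg (dclosed_lt Hy q') (dclosed_lt Hx p') lt.
  have [_ E] := pi_UQ Hx (pi_comp Hf Hg') (dclosed_lt Hx p) (dclosed_lt Hx (g q)).
  have epq : p = g q by apply: (lts_inj Hx) => r; exact: E r.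
  have := pi_lab Hg lt; rewrite -epq => e'.
  by rewrite e' ltxx in lpq.
- subst q'.
  have [_ E] := pi_UQ Hx (pi_comp Hf Hg) (dclosed_lt Hx p) (dclosed_lt Hx p').
  have e : p = p' by apply: (lts_inj Hx) => r; exact: E r.
  subst p'; have := lt_trans lqp lpq; by rewrite ltxx.
- case: (pi_onto Hf lt) => p0 lt0 e0.
  have Hf' := pi_restr Hx Hy Hf (dclosed_lt Hx p) (dclosed_lt Hy q) lt0.
  rewrite e0 in Hf'.
  have [_ E] := pi_UQ Hx (pi_comp Hf' Hg) (dclosed_lt Hx p0) (dclosed_lt Hx p').
  have e : p0 = p' by apply: (lts_inj Hx) => r; exact: E r.
  subst p'; have := pi_lab Hf lt0; rewrite e0 => e1.
  by rewrite e1 ltxx in lqp.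
Qed.

Lemma X2 : pstr x y -> pprefix y x -> False.
Proof.
move=> [p [q [[f Hf] lpq]]] [T dT [g Hg]].
have Hg' := pi_restr Hy Hx Hg (@dclosed_true _) dT (I : True) (p := q).
have [_ E] := pi_UQ Hx (pi_comp Hf Hg') (dclosed_lt Hx p) (dclosed_lt Hx (g q)).
have epq : p = g q by apply: (lts_inj Hx) => r; exact: E r.
have := pi_lab Hg (I : True) (p := q); rewrite -epq => e'.
by rewrite e' ltxx in lpq.
Qed.

Lemma X4 : pprefix x y -> pproper y x -> False.
Proof.
move=> [T dT [f Hf]] [p [g Hg]].
have := pi_G Hx Hx (pi_id (fun _ => True)) (@dclosed_true _) (g := fun r => g (f r)).
move=> H; apply: (H _ p I).
- move=> r r' _ _ lt; apply: (pi_mono Hg) => //; exact: (pi_mono Hf).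
- exact: (pi_map Hg (I : True)).
Qed.
End Excl.

Lemma pproper_prefix (x y : W) : is_word y -> pproper x y -> pprefix x y.
Proof. move=> Hy [p H]; exists (fun r => olt r p) => //; exact: dclosed_lt. Qed.

Lemma excl (x y : W) : is_word x -> is_word y ->
  (pprefix x y \/ pstr x y) -> (pstr y x \/ pproper y x) -> False.
Proof.
move=> Hx Hy [pp|ps] [qs|qp].
- exact: X2 Hy Hx qs pp.
- exact: X4 Hx pp qp.
- exact: X1 Hx Hy ps qs.
- exact: X2 Hx Hy ps (pproper_prefix Hx qp).
Qed.

Section Comp.
Variables (s u v : W).
Hypotheses (Hs : is_word s) (Hu : is_word u) (Hv : is_word v).
Lemma K1 : pstr s u -> pprefix u v -> pstr s v.
Proof.
move=> [p [q [[f Hf] l]]] [T dT [g Hg]].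
have Hg' := pi_restr Hu Hv Hg (@dclosed_true _) dT (I : True) (p := q).
exists p, (g q); split; first by exists (fun r => g (f r)); exact: pi_comp Hf Hg'.
by rewrite (pi_lab Hg (I : True)).
Qed.
Lemma K2 : pproper s u -> pprefix u v -> pproper s v.
Proof.
move=> [p [f Hf]] [T dT [g Hg]].
have Hg' := pi_restr Hu Hv Hg (@dclosed_true _) dT (I : True) (p := p).
exists (g p); exists (fun r => g (f r)); exact: pi_comp Hf Hg'.
Qed.
End Comp.

End Words3.

Section Words4.
Variables (d : Order.disp_t) (A : finOrderType d).
Local Notation W := (word A).
Local Notation pos w := (ot (wo w)).

Lemma is_word_cat (x z : W) : is_word x -> is_word z -> is_word (wcat x z).
Proof. exact: is_ord_sum. Qed.

Lemma is_word_letter (c : A) : is_word (wletter c).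
Proof.
rewrite /is_word /is_ord /=; split.
- move=> ? [].
- move=> ? ? ? [].
- move=> [] []; right; left; reflexivity.
- move=> t; constructor=> s [].
- exists (fun _ => 0%N) => [[] []] _; reflexivity.
Qed.

Lemma is_word_pow (u : W) (al : ord) : is_word u -> is_ord al -> is_word (wpow u al).
Proof. exact: is_ord_prod. Qed.

Lemma weq_refl (x : W) : weq x x.
Proof. exists id; split=> //; by exists id. Qed.

Lemma weq_sym (x y : W) : weq x y -> weq y x.
Proof.
move=> [f [[g fg gf] iff hl]]; exists g; split.
- by exists f.
- move=> p q; rewrite (iff (g p) (g q)) !gf; by [].
- move=> p; by rewrite -{2}(gf p) hl.
Qed.

Lemma weq_pi (x y : W) : weq x y -> piso x y (fun _ => True) (fun _ => True).
Proof.
move=> [f [[g fg gf] iff hl]]; exists f; split.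
- by [].
- move=> q _; by exists (g q).
- move=> p p' _ _ /iff; by [].
- by move=> p _.
Qed.

Lemma weq_of_surj (x y : W) (f : pos x -> pos y) : is_word x -> is_word y ->
  (forall q, exists p, f p = q) -> (forall p p', olt p p' -> olt (f p) (f p')) ->
  (forall p, lab (f p) = lab p) -> weq x y.
Proof.
move=> Hx Hy E mo hl.
pose g q := proj1_sig (constructive_indefinite_description _ (E q)).
have fg : forall q, f (g q) = q.
  move=> q; exact: (proj2_sig (constructive_indefinite_description _ (E q))).
have inj : forall p p', f p = f p' -> p = p'.
  move=> p p' e; case: (o_tri Hx p p') => [h|[//|h]].
  - have := mo _ _ h; rewrite e => /(o_irr Hy) [].
  - have := mo _ _ h; rewrite e => /(o_irr Hy) [].
exists f; split=> //.
- exists g; last exact: fg.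
  move=> p; apply: inj; exact: fg.
- move=> p p'; split; first exact: mo.
  move=> lt; case: (o_tri Hx p p') => [//|[e|h]].
  + subst p'; case: (o_irr Hy lt).
  + case: (o_asym Hy lt (mo _ _ h)).
Qed.

Lemma pi_weq (x y : W) f : is_word x -> is_word y ->
  pisof x y (fun _ => True) (fun _ => True) f -> weq x y.
Proof.
move=> Hx Hy H; refine (@weq_of_surj x y f Hx Hy _ _ _).
- move=> q; case: (pi_onto H (q := q) I) => p _ e; by exists p.
- move=> p p'; exact: (pi_mono H I I).
- move=> p; exact: (pi_lab H I).
Qed.

Lemma wprefix_p (x y : W) : wprefix x y -> pprefix x y.
Proof.
move=> [z [Hz [h [[k hk kh] iff hl]]]].
exists (fun q => exists p, h q = inl p).
- move=> q' q lt [p e]; have := (iff q' q).1 lt; rewrite e.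
  case E: (h q') => [p'|z'] /= H; first by exists p'.
  case: H.
exists (fun p => k (inl p)); split.
- move=> p _; exists p; exact: kh.
- move=> q [p e]; exists p => //; by rewrite -e hk.
- move=> p p' _ _ lt; apply/iff; rewrite !kh; exact: lt.
- move=> p _; by rewrite -hl kh.
Qed.

Lemma C3 (x y : W) T f : is_word x -> is_word y -> pisof x y (fun _ => True) T f -> dclosed T ->
  weq y (wcat x (wsub y (fun q => ~ T q))).
Proof.
move=> Hx Hy Hf dT; apply: weq_sym.
pose k (w : ot (wo x) + {q | ~ T q}) : pos y :=
  match w with inl p => f p | inr s => proj1_sig s end.
refine (@weq_of_surj (wcat x (wsub y (fun q => ~ T q))) y k _ Hy _ _ _).
- exact: (is_word_cat Hx (is_word_sub (fun q => ~ T q) Hy)).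
- move=> q; case: (classic (T q)) => Tq.
  + case: (pi_onto Hf Tq) => p _ e; by exists (inl p).
  + by exists (inr (exist _ q Tq)).
- move=> [p|[s ns]] [p'|[s' ns']] /= lt.
  + exact: (pi_mono Hf I I lt).
  + case: (o_tri Hy (f p) s') => [//|[e|h]].
    * case: ns'; rewrite -e; exact: (pi_map Hf I).
    * case: ns'; exact: dT h (pi_map Hf (p := p) I).
  + case: lt.
  + exact: lt.
- move=> [p|s] /=; [exact: (pi_lab Hf I) | by []].
Qed.

Lemma pprefix_w (x y : W) : is_word x -> is_word y -> pprefix x y -> wprefix x y.
Proof.
move=> Hx Hy [T dT [f Hf]]; exists (wsub y (fun q => ~ T q)); split.
- exact: is_word_sub.
- exact: C3 Hf dT.
Qed.

Lemma str_p (x y : W) : str_lt x y -> pstr x y.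
Proof.
move=> [y0 [z [z' [a [b [_ _ _ lab_ [[hx [[kx hkx khx] iffx hlx]] [hy [[ky hky khy] iffy hly]]]]]]]]].
pose p := kx (inl (inr tt)); pose q := ky (inl (inr tt)).
have Hr : forall r, olt r p -> exists w, hx r = inl (inl w).
  move=> r /(iffx r p).1; rewrite /p khx.
  case: (hx r) => [[w|[]]|w] /= H; [by exists w | case: H | case: H].
have Hq : forall r, olt r q -> exists w, hy r = inl (inl w).
  move=> r /(iffy r q).1; rewrite /q khy.
  case: (hy r) => [[w|[]]|w] /= H; [by exists w | case: H | case: H].
pose f r := match hx r with inl (inl w) => ky (inl (inl w)) | _ => q end.
exists p, q; split; last first.
  rewrite -(hlx p) -(hly q) /p /q khx khy /=; exact: lab_.
exists f; split.
- move=> r /Hr [w e]; rewrite /f e; apply/iffy; rewrite /q !khy /=; exact: I.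
- move=> q' /Hq [w e]; exists (kx (inl (inl w))).
  + apply/iffx; rewrite /p !khx /=; exact: I.
  + by rewrite /f khx -e hky.
- move=> r r' /Hr [w e] /Hr [w' e'] /(iffx r r').1; rewrite /f e e' /= => lt.
  apply/iffy; rewrite !khy /=; exact: lt.
- move=> r /Hr [w e]; rewrite /f e -hly khy -hlx e; by [].
Qed.

Lemma SPLIT (x y : W) p q f : is_word x -> is_word y ->
  pisof x y (fun r => olt r p) (fun r => olt r q) f ->
  weq y (wcat (wcat (wsub x (fun r => olt r p)) (wletter (lab q))) (wsub y (fun r => olt q r))).
Proof.
move=> Hx Hy Hf; apply: weq_sym.
pose k (w : ({r | olt r p} + unit) + {r | olt q r}) : pos y :=
  match w with inl (inl s) => f (proj1_sig s) | inl (inr _) => q | inr s => proj1_sig s end.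
refine (@weq_of_surj (wcat (wcat (wsub x (fun r => olt r p)) (wletter (lab q))) (wsub y (fun r => olt q r))) y k _ Hy _ _ _).
- exact: (is_word_cat (is_word_cat (is_word_sub (fun r => olt r p) Hx) (is_word_letter (lab q))) (is_word_sub (fun r => olt q r) Hy)).
- move=> r; case: (o_tri Hy r q) => [lt|[e|lt]].
  + case: (pi_onto Hf lt) => p' lt' e; by exists (inl (inl (exist _ p' lt'))).
  + by exists (inl (inr tt)).
  + by exists (inr (exist _ r lt)).
- move=> [[[s hs]|[]]|[s hs]] [[[s' hs']|[]]|[s' hs']] /= lt.
  + exact: (pi_mono Hf hs hs' lt).
  + exact: (pi_map Hf hs).
  + exact: (o_trans Hy (pi_map Hf hs) hs').
  + case: lt.
  + case: lt.
  + exact: hs'.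
  + case: lt.
  + case: lt.
  + exact: lt.
- move=> [[[s hs]|[]]|[s hs]] /=; [exact: (pi_lab Hf hs) | by [] | by []].
Qed.

Lemma pstr_str (x y : W) : is_word x -> is_word y -> pstr x y -> str_lt x y.
Proof.
move=> Hx Hy [p [q [[f Hf] l]]].
exists (wsub x (fun r => olt r p)), (wsub x (fun r => olt p r)), (wsub y (fun r => olt q r)),
  (lab p), (lab q); split; try exact: is_word_sub.
- exact: l.
split.
- exact: (SPLIT Hx Hx (pi_id (fun r => olt r p))).
- exact: (SPLIT Hx Hy Hf).
Qed.

End Words4.

Section Main.
Variables (d : Order.disp_t) (A : finOrderType d).
Local Notation W := (word A).
Local Notation pos w := (ot (wo w)).

Lemma lex_le_p (x y : W) : lex_le x y -> pprefix x y \/ pstr x y.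
Proof. case=> h; [left; exact: wprefix_p | right; exact: str_p]. Qed.

Lemma pi_val (v : W) (T : pos v -> Prop) :
  pisof (wsub v T) v (fun _ => True) T (fun a => proj1_sig a).
Proof.
split.
- move=> [r h] _; exact: h.
- move=> q Tq; by exists (exist _ q Tq).
- by move=> [r h] [r' h'] _ _.
- by move=> [r h] _.
Qed.

Lemma contra (u v : W) (T' : pos v -> Prop) (y0 : W) :
  is_word u -> is_word v -> is_word y0 -> prime_word v -> ~ weq u v -> dclosed T' ->
  pprefix y0 v ->
  (pstr (wsub v (fun r => ~ T' r)) y0 \/ pproper (wsub v (fun r => ~ T' r)) y0) ->
  ((forall r, T' r) -> exists2 beta, is_ord beta & weq v (wpow u beta)) -> False.
Proof.
move=> Hu Hv Hy0 [primv sufv] nuv dT pyv H prim.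
have Hs : is_word (wsub v (fun r => ~ T' r)) := is_word_sub _ Hv.
have Hsv : pstr (wsub v (fun r => ~ T' r)) v \/ pproper (wsub v (fun r => ~ T' r)) v.
  case: H => [h|h]; [left; exact: (K1 Hy0 Hv h pyv) | right; exact: (K2 Hy0 Hv h pyv)].
case: (classic (forall r, T' r)) => [allT|].
  have [beta Hb e] := prim allT.
  have [_ e'] := primv u beta Hu Hb e; exact: nuv e'.
move=> /not_all_ex_not [r1 nr1].
have Hvs : pprefix v (wsub v (fun r => ~ T' r)) \/ pstr v (wsub v (fun r => ~ T' r)).
  case: (classic (exists r, T' r)) => [[r0 Tr0]|nT].
  - apply: lex_le_p; apply: (sufv (wsub v T') (wsub v (fun r => ~ T' r))).
    + exact: is_word_sub.
    + exact: Hs.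
    + exact: (inhabits (exist _ r0 Tr0)).
    + exact: (inhabits (exist (fun r => ~ T' r) r1 nr1)).
    + exact: (C3 (is_word_sub _ Hv) Hv (pi_val T') dT).
  - left; exists (fun _ => True); first exact: dclosed_true.
    exists (fun r => exist (fun r => ~ T' r) r (fun h => nT (ex_intro _ r h))); split.
    + by [].
    + move=> [q hq] _; exists q => //; exact: sig_eq.
    + by move=> p p' _ _.
    + by move=> p _.
exact: (excl Hv Hs Hvs Hsv).
Qed.

End Main.

Section Main2.
Variables (d : Order.disp_t) (A : finOrderType d).
Local Notation W := (word A).
Local Notation pos w := (ot (wo w)).

Lemma contra_inl (u v : W) (al : ord) (Tv : pos v -> Prop) i r0 h :
  is_word u -> is_word v -> is_ord al -> prime_word v -> ~ weq u v -> pprefix u v ->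
  inhabited (pos v) -> dclosed Tv ->
  pisof v (wcat (wpow u al) v) Tv (fun r => olt r (inl (i, r0))) h ->
  ((forall r, Tv r) \/ exists2 q, (forall r, Tv r <-> olt r q) & (lab q < lab r0)%O) -> False.
Proof.
move=> Hu Hv Ha pv nuv puv iv dTv Hh cas.
have HW : is_word (wcat (wpow u al) v) := is_word_cat (is_word_pow Hu Ha) Hv.
pose T' r := Tv r /\ exists j r', h r = inl (j, r') /\ olt j i.
have dT' : dclosed T'.
  move=> r' r lt [Tr [j [r'' [e lji]]]].
  have Tr' := dTv _ _ lt Tr.
  have := pi_mono Hh Tr' Tr lt; rewrite e.
  case E: (h r') => [[j' r''']|z] /= H; last by case: H.
  split=> //; exists j', r'''; split=> //.
  case: H => [ltj|[ej _]]; [exact: (o_trans Ha ltj lji) | by rewrite ej].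
have hk : forall r, Tv r -> ~ T' r -> exists r', h r = inl (i, r') /\ olt r' r0.
  move=> r Tr nT; have := pi_map Hh Tr.
  case E: (h r) => [[j r']|z] /= H; last by case: H.
  case: H => [lt|[e lt]].
  - case: nT; split=> //; exists j, r'; split=> //.
  - subst j; by exists r'.
pose k (x : {r | ~ T' r}) : pos u :=
  match h (proj1_sig x) with inl (_, r') => r' | inr _ => r0 end.
have Hk : pisof (wsub v (fun r => ~ T' r)) u (fun x => Tv (proj1_sig x)) (fun r => olt r r0) k.
  split.
  - move=> [r nr] /= Tr; have [r' [e lt]] := hk r Tr nr; by rewrite /k /= e.
  - move=> r' lt.
    have lt' : @olt (wo (wcat (wpow u al) v)) (inl (i, r')) (inl (i, r0)) by right.
    case: (pi_onto Hh lt') => r Tr e.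
    have nr : ~ T' r.
      move=> [_ [j [r'' [e' lji]]]]; rewrite e in e'; case: e' => ej _; subst j.
      exact: (o_irr Ha lji).
    exists (exist _ r nr) => //; by rewrite /k /= e.
  - move=> [r nr] [r' nr'] /= Tr Tr' lt.
    have [a [e la]] := hk _ Tr nr; have [b [e' lb]] := hk _ Tr' nr'.
    have := pi_mono Hh Tr Tr' lt; rewrite /k /= e e' /= => [[H|[_ H]]]; [case: (o_irr Ha H) | exact: H].
  - move=> [r nr] /= Tr; have [a [e _]] := hk _ Tr nr.
    rewrite -(pi_lab Hh Tr) /k /= e; by [].
apply: (contra Hu Hv Hu pv nuv dT' puv).
- case: cas => [allT | [q Eq lq]].
  + right; exists r0; exists k; apply: (pi_ext _ _ Hk) => //.
  + have nq : ~ T' q by move=> [/Eq /(o_irr Hv)].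
    left; exists (exist _ q nq), r0; split.
    * exists k; apply: (pi_ext _ _ Hk) => //; move=> [r nr]; exact: Eq.
    * exact: lq.
- move=> allT'.
  exists (Osub (fun j => olt j i)); first exact: is_ord_sub.
  have allTv : forall r, Tv r by move=> r; case: (allT' r).
  have [hinv [Hinv hh hh']] := pi_sym Hv HW Hh iv.
  have in_w : forall (j : {j | olt j i}) r',
      @olt (wo (wcat (wpow u al) v)) (inl (proj1_sig j, r')) (inl (i, r0)).
    move=> [j lj] r' /=; by left.
  apply: weq_sym.
  refine (@weq_of_surj _ _ (wpow u (Osub (fun j => olt j i))) v
     (fun jr => hinv (inl (proj1_sig jr.1, jr.2))) (is_word_pow Hu (is_ord_sub _ Ha)) Hv _ _ _).
  + move=> r; have [_ [j [r' [e lji]]]] := allT' r.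
    exists (exist _ j lji, r') => /=; rewrite -e; exact: hh'.
  + move=> [j r1] [j' r2] lt; apply: (pi_mono Hinv (in_w _ _) (in_w _ _)).
    case: lt => /= [H|[e H]]; [by left | by right; rewrite e].
  + move=> [j r'] /=; rewrite (pi_lab Hinv (in_w _ _)); by [].
Qed.

End Main2.

Section Main3.
Variables (d : Order.disp_t) (A : finOrderType d).
Local Notation W := (word A).
Local Notation pos w := (ot (wo w)).

Lemma contra_inr (u v : W) (al : ord) (Tv : pos v -> Prop) p2 h :
  is_word u -> is_word v -> is_ord al -> prime_word v -> ~ weq u v ->
  inhabited (pos v) -> dclosed Tv ->
  pisof v (wcat (wpow u al) v) Tv (fun r => olt r (inr p2)) h ->
  ((forall r, Tv r) \/ exists2 q, (forall r, Tv r <-> olt r q) & (lab q < lab p2)%O) -> False.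
Proof.
move=> Hu Hv Ha pv nuv iv dTv Hh cas.
have HW : is_word (wcat (wpow u al) v) := is_word_cat (is_word_pow Hu Ha) Hv.
pose T' r := Tv r /\ exists z, h r = inl z.
have dT' : dclosed T'.
  move=> r' r lt [Tr [z e]].
  have Tr' := dTv _ _ lt Tr.
  have := pi_mono Hh Tr' Tr lt; rewrite e.
  case E: (h r') => [z'|z'] /= H; last by case: H.
  split=> //; by exists z'.
have hk : forall r, Tv r -> ~ T' r -> exists r', h r = inr r' /\ olt r' p2.
  move=> r Tr nT; have := pi_map Hh Tr.
  case E: (h r) => [z|r'] /= H.
  - case: nT; split=> //; by exists z.
  - by exists r'.
pose k (x : {r | ~ T' r}) : pos v :=
  match h (proj1_sig x) with inr r' => r' | inl _ => p2 end.
have Hk : pisof (wsub v (fun r => ~ T' r)) v (fun x => Tv (proj1_sig x)) (fun r => olt r p2) k.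
  split.
  - move=> [r nr] /= Tr; have [r' [e lt]] := hk r Tr nr; by rewrite /k /= e.
  - move=> r' lt.
    have lt' : @olt (wo (wcat (wpow u al) v)) (inr r') (inr p2) by [].
    case: (pi_onto Hh lt') => r Tr e.
    have nr : ~ T' r.
      move=> [_ [z e']]; rewrite e in e'; discriminate e'.
    exists (exist _ r nr) => //; by rewrite /k /= e.
  - move=> [r nr] [r' nr'] /= Tr Tr' lt.
    have [a [e la]] := hk _ Tr nr; have [b [e' lb]] := hk _ Tr' nr'.
    have := pi_mono Hh Tr Tr' lt; rewrite /k /= e e' /=; by [].
  - move=> [r nr] /= Tr; have [a [e _]] := hk _ Tr nr.
    rewrite -(pi_lab Hh Tr) /k /= e; by [].
have pvv : pprefix v v.
  exists (fun _ => True); first exact: dclosed_true.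
  exists id; exact: pi_id.
apply: (contra Hu Hv Hv pv nuv dT' pvv).
- case: cas => [allT | [q Eq lq]].
  + right; exists p2; exists k; apply: (pi_ext _ _ Hk) => //.
  + have nq : ~ T' q by move=> [/Eq /(o_irr Hv)].
    left; exists (exist _ q nq), p2; split.
    * exists k; apply: (pi_ext _ _ Hk) => //; move=> [r nr]; exact: Eq.
    * exact: lq.
- move=> allT'.
  exists (Osub (fun _ : ot al => True)); first exact: is_ord_sub.
  have [hinv [Hinv hh hh']] := pi_sym Hv HW Hh iv.
  have in_w : forall (j : {j : ot al | True}) r',
      @olt (wo (wcat (wpow u al) v)) (inl (proj1_sig j, r')) (inr p2).
    by [].
  apply: weq_sym.
  refine (@weq_of_surj _ _ (wpow u (Osub (fun _ : ot al => True))) v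
     (fun jr => hinv (inl (proj1_sig jr.1, jr.2))) (is_word_pow Hu (is_ord_sub _ Ha)) Hv _ _ _).
  + move=> r; have [Tr [[j r'] e]] := allT' r.
    exists (exist (fun _ => True) j I, r') => /=; rewrite -e; exact: hh'.
  + move=> [j r1] [j' r2] lt; apply: (pi_mono Hinv (in_w _ _) (in_w _ _)).
    case: lt => /= [H|[e H]]; [by left | by right; rewrite e].
  + move=> [j r'] /=; rewrite (pi_lab Hinv (in_w _ _)); by [].
Qed.

End Main3.

Lemma contra_W (d : Order.disp_t) (A : finOrderType d) (u v : word A) (al : ord)
  (Tv : ot (wo v) -> Prop) w h :
  is_word u -> is_word v -> is_ord al -> prime_word v -> ~ weq u v -> pprefix u v ->
  inhabited (ot (wo v)) -> dclosed Tv ->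
  pisof v (wcat (wpow u al) v) Tv (fun r => olt r w) h ->
  ((forall r, Tv r) \/ exists2 q, (forall r, Tv r <-> olt r q) & (lab q < lab w)%O) -> False.
Proof.
move: w h => [[i r0]|p2] h Hu Hv Ha pv nuv puv iv dTv Hh cas.
- exact: (contra_inl Hu Hv Ha pv nuv puv iv dTv Hh cas).
- exact: (contra_inr Hu Hv Ha pv nuv iv dTv Hh cas).
Qed.

Theorem mainTheorem10 (d : Order.disp_t) (A : finOrderType d) (u v : word A) :
  is_word u -> is_word v -> prime_word u -> prime_word v -> lex_lt u v ->
  forall alpha : ord, is_ord alpha ->
    lex_lt (wpow u alpha) (wcat (wpow u alpha) v) /\
    lex_le (wcat (wpow u alpha) v) v.
Proof.
move=> Hu Hv pu pv [luv nuv] al Ha.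
have HP : is_word (wpow u al) := is_word_pow Hu Ha.
have HW : is_word (wcat (wpow u al) v) := is_word_cat HP Hv.
have [v0] : inhabited (ot (wo v)).
  apply: NNPP => nv.
  case: luv => [/wprefix_p [T dT [f Hf]] | /str_p [p [q _]]]; last exact: nv (inhabits q).
  apply: nuv; apply: (pi_weq Hu Hv (f := f)).
  apply: (pi_ext _ _ Hf) => // q; split=> // _; case: (nv (inhabits q)).
split.
- split.
  + left; exists v; split; [exact: Hv | exact: weq_refl].
  + move=> e; have [g [[g' _ _] iffg _]] := weq_sym e.
    have H := pi_G HP HP (pi_id (fun _ => True)) (@dclosed_true _) (g := fun r => g (inl r)).
    apply: (H _ (g (inr v0)) I).
    * move=> r r' _ _ lt; apply/iffg; exact: lt.
    * apply/iffg; exact: I.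
- case: luv => [/wprefix_p puv | /str_p [p [q [[f Hf] lpq]]]].
  + case: (total HW Hv) => [[T dT [f Hf]] | [[w [h Hh]] | [w [q [[h Hh] lwq]]]]].
    * left; apply: pprefix_w => //; exists T => //; by exists f.
    * exfalso; apply: (contra_W Hu Hv Ha pv nuv puv (inhabits v0) (@dclosed_true _) Hh).
      by left.
    * have : (lab w != lab q) by apply/eqP.
      move=> /lt_total /orP [lt|lt].
      - right; apply: pstr_str => //; exists w, q; split => //; by exists h.
      - exfalso.
        have [g [Hg _ _]] := pi_sym HW Hv Hh (inhabits w).
        apply: (contra_W Hu Hv Ha pv nuv puv (inhabits v0) (dclosed_lt Hv q) Hg).
        right; exists q => //.
  + case: (classic (inhabited (ot al))) => [[i1]|nal].
    * have [i0 [_ mi0]] := o_min Ha (ex_intro (fun _ => True) i1 I).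
      right; apply: pstr_str => //.
      have hw : forall w : ot (wo (wcat (wpow u al) v)), olt w (inl (i0, p)) ->
          exists r, w = inl (i0, r) /\ olt r p.
        move=> [[j r]|z] /= H; last by case: H.
        case: H => [lt|[e lt]]; first by case: (mi0 j I lt).
        subst j; by exists r.
      exists (inl (i0, p)), q; split; last exact: lpq.
      exists (fun w : ot (wo (wcat (wpow u al) v)) =>
                match w with inl (_, r) => f r | inr _ => q end); split.
      - move=> w /hw [r [-> lt]] /=; exact: (pi_map Hf lt).
      - move=> q' lt; case: (pi_onto Hf lt) => r lr e; exists (inl (i0, r)) => //=.
        by right.
      - move=> w w' /hw [r [-> lr]] /hw [r' [-> lr']] /= [H|[_ H]].
        + case: (o_irr Ha H).
        + exact: (pi_mono Hf lr lr' H).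
      - move=> w /hw [r [-> lr]] /=; exact: (pi_lab Hf lr).
    * left; apply: pprefix_w => //; exists (fun _ => True); first exact: dclosed_true.
      exists (fun w : ot (wo (wcat (wpow u al) v)) =>
                match w with inl (j, _) => False_rect _ (nal (inhabits j)) | inr r => r end).
      split.
      - by [].
      - move=> q' _; by exists (inr q').
      - move=> [[j r]|z] [[j' r']|z'] _ _ lt; try case: (nal (inhabits j)); try case: (nal (inhabits j')).
        exact: lt.
      - move=> [[j r]|z] _; [case: (nal (inhabits j)) | by []].
Qed.
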